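(* Let $p(x,y)$ and $q(x,y)$ be real homogeneous polynomials in two variables of the same degree $j>1$, not both identically zero. If $$\frac{\partial p}{\partial x}+\frac{\partial q}{\partial y}=0 \qquad\text{and}\qquad \frac{\partial p}{\partial x}\frac{\partial q}{\partial y}-\frac{\partial p}{\partial y}\frac{\partial q}{\partial x}=0$$ identically on $\mathbb{R}^2$, then there exist $\alpha,\beta,\zeta\in\mathbb{R}$ with $\alpha^2+\beta^2\neq 0$ and $\zeta\neq 0$ such that $$p(x,y)=\zeta\alpha(\beta x-\alpha y)^j,\qquad q(x,y)=\zeta\beta(\beta x-\alpha y)^j.$$ *)

(* Defs.v *)
From HB Require Import structures.
From mathcomp Require Import all_boot all_order all_algebra.
From mathcomp Require Import reals.
From mathcomp Require Export mpoly.

(* Main.v *)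
Require Import Defs.
From HB Require Import structures.
From mathcomp Require Import all_boot all_order all_algebra.
From mathcomp Require Import reals.
From mathcomp Require Import mpoly.
From mathcomp Require Import ring.
Import Order.TTheory GRing.Theory Num.Theory.
Local Open Scope ring_scope.

Section Uni.
Variable R : numFieldType.
Implicit Types p f g h : {poly R}.

Lemma coef_gt_size p i : p`_i != 0 -> (i < size p)%N.
Proof.
move=> nz; rewrite ltnNge; apply: contra nz => /leq_sizeP H.
by rewrite H.
Qed.

Lemma size_deriv_S p n : size p = n.+2 ->
  size p^`() = n.+1 /\ lead_coef p^`() = lead_coef p *+ n.+1.
Proof.
move=> sp.
have c : p^`()`_n = lead_coef p *+ n.+1 by rewrite coef_deriv lead_coefE sp.
have nz : p^`()`_n != 0.
  by rewrite c mulrn_eq0 /= lead_coef_eq0 -size_poly_eq0 sp.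
have pn0 : p != 0 by rewrite -size_poly_eq0 sp.
have sz : size p^`() = n.+1.
  apply/anti_leq; rewrite coef_gt_size // andbT.
  by have := lt_size_deriv pn0; rewrite sp.
by split => //; rewrite lead_coefE sz.
Qed.

Lemma deriv0_size p : p^`() = 0 -> (size p <= 1)%N.
Proof.
move=> d; case sp: (size p) => [|[|n]] //.
by have [+ _] := size_deriv_S _ _ sp; rewrite d size_poly0.
Qed.

Lemma prop_size f g : f != 0 -> g != 0 -> f^`() * g = f * g^`() ->
  size f = size g.
Proof.
move=> f0 g0 E.
have s1 : forall p, p != 0 -> size p = 1%N -> p^`() = 0.
  by move=> p _ sp; rewrite (size1_polyC (_ : size p <= 1)%N) ?sp // derivC.
have s1' : forall p, p != 0 -> p^`() = 0 -> size p = 1%N.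
  move=> p p0 /deriv0_size; rewrite leq_eqVlt ltnS size_poly_leq0 (negbTE p0) orbF.
  by move/eqP.
case sf: (size f) => [|[|a]]; first by move: f0; rewrite -size_poly_eq0 sf.
  apply/esym/s1' => //; move: E; rewrite s1 // mul0r => /esym/eqP.
  by rewrite mulf_eq0 (negbTE f0) /= => /eqP.
case sg: (size g) => [|[|b]]; first by move: g0; rewrite -size_poly_eq0 sg.
  move: E; rewrite (s1 g) // mulr0 => /eqP; rewrite mulf_eq0 (negbTE g0) orbF.
  by move=> /eqP d; have [+ _] := size_deriv_S _ _ sf; rewrite d size_poly0.
have [_ lf] := size_deriv_S _ _ sf; have [_ lg] := size_deriv_S _ _ sg.
move/(congr1 lead_coef): E; rewrite !lead_coefM lf lg.
rewrite -mulr_natr -[lead_coef g *+ _]mulr_natr mulrAC mulrA => /mulfI.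
have nz : lead_coef f * lead_coef g != 0 by rewrite mulf_neq0 ?lead_coef_eq0.
by move/(_ nz)/eqP; rewrite eqr_nat eqSS => /eqP ->.
Qed.

Lemma prop_lemma f g : g != 0 -> f^`() * g = f * g^`() ->
  exists mu, f = mu *: g.
Proof.
move=> g0 E.
set mu := lead_coef f / lead_coef g.
exists mu; set h := f - mu *: g.
have Eh : h^`() * g = h * g^`().
  by rewrite /h derivB derivZ !mulrBl E -!scalerAl [g^`() * g]mulrC.
apply/eqP; rewrite -subr_eq0; apply/eqP; apply/eqP/negPn/negP => h0.
have sh := prop_size _ _ h0 g0 Eh.
case: (eqVneq f 0) => [f0|f0].
  by move: h0; rewrite /mu f0 lead_coef0 mul0r scale0r subr0 eqxx.
have sf : size f = size g by apply: prop_size f0 g0 E.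
have lg0 : lead_coef g != 0 by rewrite lead_coef_eq0.
have : (size h <= (size g).-1)%N.
  apply/leq_sizeP => k; rewrite leq_eqVlt => /orP [/eqP <-|lt].
    by rewrite /h coefB coefZ -lead_coefE -sf -lead_coefE /mu divfK ?subrr.
  have sgk : (size g <= k)%N.
    by move: lt; case: (size g) => //.
  by rewrite /h coefB coefZ !nth_default ?sf // mulr0 subrr.
rewrite sh; case sg: (size g) => [|k] //=.
  by move: g0; rewrite -size_poly_eq0 sg.
by rewrite ltnn.
Qed.
End Uni.
Section Uni2.
Variable R : numFieldType.
Implicit Types p f g h : {poly R}.

Lemma mulrn_inj (x : R) a b : x *+ a = x *+ b -> x = 0 \/ a = b.
Proof.
move=> E; case: (eqVneq x 0) => [->|x0]; [by left|right].
move: E; rewrite -[x *+ a]mulr_natr -[x *+ b]mulr_natr => /(mulfI x0)/eqP.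
by rewrite eqr_nat => /eqP.
Qed.

Lemma euler_lemma (G : {poly R}) j : 'X * G^`() = G *+ j -> G = G`_j *: 'X^j.
Proof.
move=> E; apply/polyP => k; rewrite coefZ coefXn.
have := congr1 (fun p => p`_k) E; rewrite coefXM coefMn.
case: k => [|k].
  case: j {E} => [|j]; first by rewrite eqxx mulr1.
  by move/esym/eqP; rewrite mulrn_eq0 orFb => /eqP ->; rewrite ?mul0r ?mulr0.
rewrite coef_deriv => /mulrn_inj [z|->]; last by rewrite eqxx mulr1.
by case: eqP => [<-|_]; rewrite ?z ?mul0r ?mulr0.
Qed.

Lemma shift_lemma g (mu : R) j :
  (mu%:P - 'X) * g^`() + g *+ j = 0 -> exists c, g = c *: ('X - mu%:P) ^+ j.
Proof.
move=> E.
have E' : ('X - mu%:P) * g^`() = g *+ j.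
  by move/eqP: E; rewrite addr_eq0 => /eqP E; rewrite -opprB mulNr E opprK.
set G := g \Po ('X + mu%:P).
have XG : 'X * G^`() = G *+ j.
  rewrite /G deriv_comp derivD derivX derivC addr0 mulr1.
  have HX : ('X - mu%:P) \Po ('X + mu%:P) = 'X.
    by rewrite comp_polyB comp_polyX comp_polyC addrK.
  by rewrite -{1}HX -comp_polyM E' /G (raddfMn (comp_poly ('X + mu%:P))).
exists G`_j.
have -> : g = G \Po ('X - mu%:P).
  by rewrite /G -comp_polyA comp_polyD comp_polyX comp_polyC subrK comp_polyXr.
by rewrite {1}(euler_lemma _ _ XG) comp_polyZ comp_Xn_poly.
Qed.
End Uni2.
Section Uni3.
Variable R : realFieldType.
Implicit Types p f g h : {poly R}.

Lemma uni_main j f g : (f != 0) || (g != 0) ->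
  f^`() + (g *+ j - 'X * g^`()) = 0 ->
  f^`() * g = f * g^`() ->
  exists alpha beta zeta : R,
    [/\ alpha ^+ 2 + beta ^+ 2 != 0, zeta != 0,
        f = (zeta * alpha) *: (beta *: 'X - alpha%:P) ^+ j
      & g = (zeta * beta) *: (beta *: 'X - alpha%:P) ^+ j].
Proof.
move=> nz D J.
case: (eqVneq g 0) => [g0|g0].
  move: nz D; rewrite g0 eqxx orbF => f0.
  rewrite deriv0 mulr0 mul0rn subr0 addr0 => d.
  have sf := deriv0_size _ _ d.
  set c := f`_0.
  have m1 : ((-1 : R) ^+ j) != 0 by rewrite expf_neq0 // oppr_eq0 oner_eq0.
  exists 1, 0, (c / (-1) ^+ j); split.
  - by rewrite expr0n /= addr0 expr1n oner_eq0.
  - rewrite mulf_neq0 ?invr_eq0 //; move: f0; rewrite (size1_polyC sf) polyC_eq0 //.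
  - rewrite scale0r add0r mulr1 -polyCN -rmorphXn -mul_polyC -polyCM divfK //.
    exact: size1_polyC.
  - by rewrite mulr0 scale0r.
have [mu fE] := prop_lemma _ _ _ g0 J.
have [c gE] : exists c, g = c *: ('X - mu%:P) ^+ j.
  apply: shift_lemma.
  by rewrite fE derivZ in D; rewrite -D mulrBl mul_polyC addrA addrAC.
exists mu, 1, c; split.
- by rewrite expr1n gt_eqF // ltr_wpDl ?sqr_ge0 ?ltr01.
- by apply: contra g0 => /eqP c0; rewrite gE c0 scale0r.
- by rewrite scale1r fE gE scalerA mulrC.
- by rewrite scale1r gE mulr1.
Qed.
End Uni3.
Section M.
Variable R : realFieldType.
Implicit Types P Q : {mpoly R[2]}.

Definition hh (i : 'I_2) : {poly R} := if i == ord0 then 'X else 1.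
Definition phi P : {poly R} := mmap (@polyC R) hh P.

Lemma phiD P Q : phi (P + Q) = phi P + phi Q. Proof. exact: raddfD. Qed.
Lemma phiB P Q : phi (P - Q) = phi P - phi Q. Proof. exact: raddfB. Qed.
Lemma phiM P Q : phi (P * Q) = phi P * phi Q. Proof. exact: rmorphM. Qed.
Lemma phiZ c P : phi (c *: P) = c *: phi P.
Proof. by rewrite /phi mmapZ mul_polyC. Qed.
Lemma phiXm (m : 'X_{1..2}) : phi 'X_[m] = 'X^(m ord0).
Proof.
by rewrite /phi mmapX /mmap1 !big_ord_recl big_ord0 /hh /= expr1n !mulr1.
Qed.
Lemma phiX0 : phi 'X_ord0 = 'X.
Proof. by rewrite /phi mmapX mmap1U. Qed.
Lemma phiX1 : phi 'X_(1 : 'I_2) = 1.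
Proof. by rewrite /phi mmapX mmap1U. Qed.

Lemma phi0 : phi 0 = 0. Proof. exact: raddf0. Qed.

Lemma phi_sum (s : seq 'X_{1..2}) (F : 'X_{1..2} -> {mpoly R[2]}) :
  phi (\sum_(m <- s) F m) = \sum_(m <- s) phi (F m).
Proof.
elim: s => [|a s IH]; first by rewrite !big_nil phi0.
by rewrite !big_cons phiD IH.
Qed.

Lemma phi_eval P t :
  (phi P).[t] = P.@[fun i : 'I_2 => if i == ord0 then t else 1].
Proof.
elim/mpolyind: P => [|c m p _ _ IH]; first by rewrite phi0 horner0 meval0.
rewrite phiD hornerD IH mevalD phiZ hornerZ phiXm hornerXn mevalZ mevalX.
by rewrite !big_ord_recl big_ord0 /= expr1n !mulr1.
Qed.

Lemma phi_d0 P : phi (P^`M(ord0)) = (phi P)^`().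
Proof.
elim/mpolyind: P => [|c m p _ _ IH]; first by rewrite mderiv0 phi0 deriv0.
rewrite mderivD !phiD IH derivD; congr (_ + _).
rewrite mderivZ mderivX !phiZ !phiXm derivZ derivXn mnmBE mnm1E eqxx subn1.
by rewrite scaler_nat.
Qed.

Lemma mdeg2 (m : 'X_{1..2}) : mdeg m = (m ord0 + m (lift ord0 ord0))%N.
Proof. by rewrite mdegE !big_ord_recl big_ord0 addn0. Qed.

Lemma ord2_cases (i : 'I_2) : i = ord0 \/ i = lift ord0 ord0.
Proof.
case: i => [[|[|k]]] Hi; [left|right|by []]; exact/val_inj.
Qed.

Lemma phi_d1_mon c (m : 'X_{1..2}) j : mdeg m = j ->
  phi ((c *: 'X_[m])^`M(lift ord0 ord0)) =
  phi (c *: 'X_[m]) *+ j - 'X * (phi (c *: 'X_[m]))^`().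
Proof.
move=> dm; rewrite mderivZ mderivX !phiZ !phiXm derivZ derivXn mnmBE mnm1E.
rewrite /= subn0 -dm mdeg2 scaler_nat -scalerAr scalerMnr -scalerBr.
congr (_ *: _).
have -> : ('X : {poly R}) * ('X^((m ord0).-1) *+ m ord0) = 'X^(m ord0) *+ m ord0.
  by case: (m ord0) => [|a]; rewrite ?mulr0n ?mulr0 // mulrnAr -exprS.
by rewrite mulrnDr addrAC subrr add0r.
Qed.

Lemma phi_d1 P j : P \is j.-homog ->
  phi (P^`M(lift ord0 ord0)) = phi P *+ j - 'X * (phi P)^`().
Proof.
move=> hP; rewrite (mpolyE P).
rewrite raddf_sum !phi_sum raddf_sum -sumrMnl mulr_sumr -sumrB /=.
apply: eq_big_seq => m ms.
by apply: phi_d1_mon; apply: (dhomog_mf hP).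
Qed.

Lemma mnm_eq2 {j} {m1 m2 : 'X_{1..2}} : mdeg m1 = j -> mdeg m2 = j ->
  m1 ord0 = m2 ord0 -> m1 = m2.
Proof.
rewrite !mdeg2 => d1 d2 e; apply/mnmP => i.
case: (ord2_cases i) => -> //.
by apply/eqP; rewrite -(eqn_add2l (m1 ord0)) d1 e d2.
Qed.

Lemma phi_coef {P j} {m : 'X_{1..2}} : P \is j.-homog -> mdeg m = j ->
  (phi P)`_(m ord0) = P@_m.
Proof.
move=> hP dm; rewrite {1}(mpolyE P) phi_sum coef_sum.
under eq_bigr do rewrite phiZ phiXm coefZ coefXn.
case: (boolP (m \in msupp P)) => ms.
  rewrite (bigD1_seq m) ?msupp_uniq //= eqxx mulr1 big1_seq ?addr0 //.
  move=> m' /andP [ne m's]; case: eqP => [e|_]; last by rewrite mulr0.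
  by move: ne; rewrite (mnm_eq2 dm (dhomog_mf hP m's) e) eqxx.
rewrite (memN_msupp_eq0 ms) big1_seq // => m' /andP [_ m's].
case: eqP => [e|_]; last by rewrite mulr0.
by move: ms; rewrite (mnm_eq2 dm (dhomog_mf hP m's) e) m's.
Qed.

Lemma phi_inj P Q j : P \is j.-homog -> Q \is j.-homog -> phi P = phi Q -> P = Q.
Proof.
move=> hP hQ e; apply/mpolyP => m.
case: (eqVneq (mdeg m) j) => dm.
  by rewrite -(phi_coef hP dm) -(phi_coef hQ dm) e.
by rewrite !(dhomog_nemf_coeff _ dm).
Qed.

Lemma phi_vanish P : (forall v : 'I_2 -> R, P.@[v] = 0) -> phi P = 0.
Proof.
move=> H.
apply: (@roots_geq_poly_eq0 _ _ [seq i%:R | i <- iota 0 (size (phi P))]).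
- by apply/allP => x /mapP [i _ ->]; rewrite /root phi_eval H.
- by rewrite map_inj_uniq ?iota_uniq // => a b /eqP; rewrite eqr_nat => /eqP.
- by rewrite size_map size_iota.
Qed.
End M.

Arguments phi {R}.
Arguments phi0 {R}.
Arguments phiD {R}.
Arguments phiB {R}.
Arguments phiM {R}.
Arguments phiZ {R}.
Arguments phi_d0 {R}.
Arguments phi_d1 {R P j}.
Arguments phi_vanish {R P}.
Arguments phi_inj {R P Q j}.
Arguments uni_main {R j f g}.

Lemma jac_ident (R : comRingType) (f g f' g' X : R) j :
  f' * (g *+ j - X * g') - (f *+ j - X * f') * g' = (f' * g - f * g') *+ j.
Proof. ring. Qed.

(* p, q : real polynomials in the variables x = 'X_0, y = 'X_1;
   p^`M(0) = dp/dx, p^`M(1) = dp/dy (formal partial derivatives);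
   v : 'I_2 -> R is a point of R^2 and P.@[v] the evaluation at v. *)
Theorem lemma1 (R : realType) (j : nat) (p q : {mpoly R[2]}) :
  (1 < j)%N ->
  p \is j.-homog -> q \is j.-homog ->
  (p != 0) || (q != 0) ->
  (forall v : 'I_2 -> R, (p^`M(0) + q^`M(1)).@[v] = 0) ->
  (forall v : 'I_2 -> R,
      (p^`M(0) * q^`M(1) - p^`M(1) * q^`M(0)).@[v] = 0) ->
  exists alpha beta zeta : R,
    [/\ alpha ^+ 2 + beta ^+ 2 != 0, zeta != 0,
        p = (zeta * alpha) *: (beta *: 'X_0 - alpha *: 'X_1) ^+ j
      & q = (zeta * beta) *: (beta *: 'X_0 - alpha *: 'X_1) ^+ j].
Proof.
move=> j1 hp hq nz Hdiv Hjac.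
have e0 : (0 : 'I_2) = ord0 by apply/val_inj.
have e1 : (1 : 'I_2) = lift ord0 ord0 by apply/val_inj.
rewrite e0 e1 in Hdiv Hjac *.
set f := phi p; set g := phi q.
have D : f^`() + (g *+ j - 'X * g^`()) = 0.
  by rewrite -phi_d0 -(phi_d1 hq) -phiD phi_vanish.
have J : f^`() * g = f * g^`().
  have := phi_vanish Hjac.
  rewrite phiB !phiM !phi_d0 (phi_d1 hp) (phi_d1 hq) -/f -/g jac_ident.
  move/eqP; rewrite -mulr_natr mulf_eq0 subr_eq0 => /orP [/eqP //|].
  rewrite -(rmorph_nat (@polyC R) j) polyC_eq0 pnatr_eq0 => /eqP j0.
  by move: j1; rewrite j0.
have nz' : (f != 0) || (g != 0).
  move: nz; apply: contraLR; rewrite negb_or !negbK => /andP [/eqP f0 /eqP g0].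
  rewrite negb_or !negbK; apply/andP; split; apply/eqP.
    by apply: (phi_inj hp (dhomog0 _ _ _)); rewrite phi0.
  by apply: (phi_inj hq (dhomog0 _ _ _)); rewrite phi0.
have [a [b [z [H1 H2 Hf Hg]]]] := uni_main nz' D J.
have hL : (b *: 'X_ord0 - a *: 'X_(lift ord0 ord0) : {mpoly R[2]}) ^+ j \is j.-homog.
  have h1 : (b *: 'X_ord0 - a *: 'X_(lift ord0 ord0) : {mpoly R[2]}) \is 1.-homog.
    by rewrite rpredB // dhomogZ // dhomogX; apply/eqP; apply: mdeg1.
  by have := dhomogMn j h1; rewrite mul1n.
have pL : phi ((b *: 'X_ord0 - a *: 'X_(lift ord0 ord0) : {mpoly R[2]}) ^+ j) =
   (b *: 'X - a%:P) ^+ j.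
  rewrite /phi rmorphXn raddfB /= -!/(phi _) !phiZ phiX0 phiX1.
  by rewrite alg_polyC.
exists a, b, z; split => //.
  by apply: (phi_inj hp (dhomogZ _ hL)); rewrite phiZ pL.
by apply: (phi_inj hq (dhomogZ _ hL)); rewrite phiZ pL.
Qed.
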